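(* Let $n\ge3$ and $\pi\in\mathrm{Eq}(\mathsf{B}_n)$. If the variety $\mathbf{A}_n\{\mathsf{Id}(\pi)\}$ satisfies an identity $\mathbf{u}\approx\mathbf{v}$ with $\mathbf{u}\in\mathsf{B}_n$, then $\mathbf{v}\in\mathsf{B}_n$ and $(\mathbf{u},\mathbf{v})\in\pi$.
   Context: All varieties are varieties of monoids (signature: associative binary operation and identity constant $1$). Words are elements of the free monoid $X^*$ over a countably infinite set $X$ of variables; identities are pairs of words, and variables may be substituted by $1$. For a variety $\mathbf{V}$ and set $\Sigma$ of identities, $\mathbf{V}\Sigma$ is the subvariety of $\mathbf{V}$ defined by $\Sigma$. $\mathbf{O}$ is the variety defined by $xyt_1xt_2y \approx yxt_1xt_2y$, $xt_1xyt_2y \approx xt_1yxt_2y$, $xt_1yt_2xy \approx xt_1yt_2yx$. For $n\ge3$, $\mathtt{A}_n$ is $x^n t_1\cdots t_n \approx t_1x\,t_2x\cdots t_nx$, $\mathbf{A}_n=\mathbf{O}\{\mathtt{A}_n\}$, and $\mathsf{B}_n=\{x^{n-1-j}tx^{j}:0\le j\le n-1\}$ (with $x,t$ distinct variables). For a set $\mathsf{W}$ of words, $\mathrm{Eq}(\mathsf{W})$ is the lattice of equivalence relations on $\mathsf{W}$ and $\mathsf{Id}(\pi)=\{\mathbf{u}\approx\mathbf{v}:(\mathbf{u},\mathbf{v})\in\pi\}$. *)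

(* Defs.v *)
From mathcomp Require Import all_boot.
Set Implicit Arguments. Unset Strict Implicit. Unset Printing Implicit Defensive.

Record monoid := Monoid {
  mcar :> Type;
  mop : mcar -> mcar -> mcar;
  mone : mcar;
  mopA : forall a b c, mop a (mop b c) = mop (mop a b) c;
  mop1l : forall a, mop mone a = a;
  mop1r : forall a, mop a mone = a
}.

Definition word := seq nat.

Definition eval (M : monoid) (s : nat -> M) (w : word) : M :=
  foldr (fun x acc => mop (s x) acc) (mone M) w.

Definition sat (M : monoid) (u v : word) : Prop :=
  forall s : nat -> M, eval s u = eval s v.

(* Defining identities of O; variables x=0, y=1, t1=2, t2=3. *)
Definition sat_O (M : monoid) : Prop :=
  [/\ sat M [:: 0; 1; 2; 0; 3; 1] [:: 1; 0; 2; 0; 3; 1],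
      sat M [:: 0; 2; 0; 1; 3; 1] [:: 0; 2; 1; 0; 3; 1]
    & sat M [:: 0; 2; 1; 3; 0; 1] [:: 0; 2; 1; 3; 1; 0] ].

(* A_n : x^n t1 ... tn ~ t1 x t2 x ... tn x, with x = 0, t_i = i. *)
Definition An_lhs (n : nat) : word := nseq n 0 ++ iota 1 n.
Definition An_rhs (n : nat) : word := flatten [seq [:: i; 0] | i <- iota 1 n].

(* B_n = { x^(n-1-j) t x^j : 0 <= j <= n-1 }, with x = 0, t = 1. *)
Definition Bword (n j : nat) : word := nseq (n - 1 - j) 0 ++ 1 :: nseq j 0.
Definition inB (n : nat) (w : word) : Prop := exists2 j, j < n & w = Bword n j.

Definition eqrel_on_B (n : nat) (pi : word -> word -> Prop) : Prop :=
  [/\ forall u v, pi u v -> inB n u /\ inB n v,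
      forall u, inB n u -> pi u u,
      forall u v, pi u v -> pi v u
    & forall u v w, pi u v -> pi v w -> pi u w ].

(* Membership of M in the variety A_n{Id(pi)} = O{A_n}{Id(pi)}. *)
Definition in_AnId (n : nat) (pi : word -> word -> Prop) (M : monoid) : Prop :=
  [/\ sat_O M, sat M (An_lhs n) (An_rhs n) & forall u v, pi u v -> sat M u v].

Definition var_sat (n : nat) (pi : word -> word -> Prop) (u v : word) : Prop :=
  forall M : monoid, in_AnId n pi M -> sat M u v.

(* Main.v *)
Require Import Defs.
From mathcomp Require Import all_boot zify.
From Stdlib Require Import ClassicalEpsilon.
Set Implicit Arguments. Unset Strict Implicit.

Inductive R := RX of nat | RT of nat & nat | RZ.

Definition rmul (r s : R) : R :=
  match r, s with
  | RX k, RX l => RX (k + l)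
  | RX k, RT a b => RT (k + a) b
  | RT a b, RX k => RT a (b + k)
  | _, _ => RZ
  end.

Lemma rmulA r s t : rmul r (rmul s t) = rmul (rmul r s) t.
Proof. by case: r => [k|a b|]; case: s => [l|c d|]; case: t => [m|e g|] //=; rewrite addnA. Qed.

Lemma rmul1l r : rmul (RX 0) r = r.
Proof. by case: r => //= *; rewrite add0n. Qed.
Lemma rmul1r r : rmul r (RX 0) = r.
Proof. by case: r => //= *; rewrite addn0. Qed.

Definition nrm n (f : nat -> nat) r :=
  match r with
  | RT a b => if a + b < n - 1 then RT a b
              else if a + b == n - 1 then RT (n - 1 - f b) (f b) else RZ
  | _ => r
  end.

Definition valid n (f : nat -> nat) r :=
  match r with
  | RT a b => (a + b < n - 1) || ((a + b == n - 1) && (f b == b))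
  | _ => true
  end.

Definition goodf n (f : nat -> nat) :=
  forall b, b <= n - 1 -> f b <= n - 1 /\ f (f b) = f b.

Lemma valid_nrm n f r : goodf n f -> valid n f (nrm n f r).
Proof.
move=> Hf; case: r => //= a b.
case: ltnP => h1 /=; first by rewrite h1.
case: eqP => h2 //=; have [|h3 h4] := Hf b; first lia.
rewrite h4 eqxx subnK // ltnn eqxx //.
Qed.

Lemma nrm_valid n f r : valid n f r -> nrm n f r = r.
Proof.
case: r => //= a b /orP [h|/andP [/eqP h1 /eqP h2]]; first by rewrite h.
rewrite h1 ltnn eqxx h2; congr RT; lia.
Qed.

Lemma nrm_id n f r : goodf n f -> nrm n f (nrm n f r) = nrm n f r.
Proof. by move=> Hf; apply/nrm_valid/valid_nrm. Qed.

Ltac brute := repeat (case: ifP => /= ?); try lia; try done; try (congr RT; lia).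

Lemma nrm_mull n f r s : goodf n f -> nrm n f (rmul (nrm n f r) s) = nrm n f (rmul r s).
Proof.
move=> Hf; case: r => [k|a b|] //; case: s => [l|c d|] //=; last 2 first.
- by brute.
- by brute.
have [Hb|Hb] := leqP b (n-1); last by brute.
have [h3 h4] := Hf b Hb.
case: l => [|l]; rewrite ?addn0; brute; rewrite ?addn0 ?h4; brute.
Qed.

Lemma nrm_mulr n f r s : goodf n f -> nrm n f (rmul r (nrm n f s)) = nrm n f (rmul r s).
Proof.
move=> Hf; case: s => [k|a b|] //; case: r => [l|c d|] //=; last by brute.
have [Hb|Hb] := leqP b (n-1); last by brute.
have [h3 h4] := Hf b Hb.
case: l => [|l]; rewrite ?add0n; brute; rewrite ?add0n ?h4; brute.
Qed.

Definition Mcar n f := {r : R | valid n f r}.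

Lemma Mcar_inj n f (x y : Mcar n f) : sval x = sval y -> x = y.
Proof.
case: x => x hx; case: y => y hy /= E; subst y; congr exist; apply: bool_irrelevance.
Qed.

Definition Mmul n f (Hf : goodf n f) (x y : Mcar n f) : Mcar n f :=
  exist _ (nrm n f (rmul (sval x) (sval y))) (valid_nrm _ Hf).

Definition Mone n f : Mcar n f := exist _ (RX 0) isT.

Lemma MmulA n f Hf (x y z : Mcar n f) :
  Mmul Hf x (Mmul Hf y z) = Mmul Hf (Mmul Hf x y) z.
Proof.
apply: Mcar_inj => /=; rewrite nrm_mulr // nrm_mull // rmulA //.
Qed.

Lemma Mmul1l n f Hf (x : Mcar n f) : Mmul Hf (Mone n f) x = x.
Proof. apply: Mcar_inj; case: x => x hx; exact: (etrans (f_equal (nrm n f) (rmul1l x)) (nrm_valid hx)). Qed.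

Lemma Mmul1r n f Hf (x : Mcar n f) : Mmul Hf x (Mone n f) = x.
Proof. apply: Mcar_inj; case: x => x hx; exact: (etrans (f_equal (nrm n f) (rmul1r x)) (nrm_valid hx)). Qed.

Definition Mon n f (Hf : goodf n f) : monoid :=
  @Defs.Monoid (Mcar n f) (Mmul Hf) (Mone n f) (@MmulA n f Hf) (@Mmul1l n f Hf) (@Mmul1r n f Hf).

Definition reval (r : nat -> R) (w : word) : R :=
  foldr (fun x acc => rmul (r x) acc) (RX 0) w.

Lemma val_eval n f (Hf : goodf n f) (s : nat -> Mon Hf) w :
  sval (eval s w) = nrm n f (reval (fun i => sval (s i)) w).
Proof.
elim: w => [|x w IH] //=.
by rewrite IH nrm_mulr.
Qed.

Lemma sat_of_raw n f (Hf : goodf n f) u v :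
  (forall r, nrm n f (reval r u) = nrm n f (reval r v)) -> sat (Mon Hf) u v.
Proof. by move=> H s; apply: Mcar_inj; rewrite !val_eval. Qed.

Lemma reval_cat r w1 w2 : reval r (w1 ++ w2) = rmul (reval r w1) (reval r w2).
Proof. by elim: w1 => [|x w IH]; [exact: (esym (rmul1l _)) | rewrite /= IH rmulA]. Qed.

Lemma reval_filter r w : r 0 = RX 0 -> reval r w = reval r [seq i <- w | i != 0].
Proof.
move=> H0; elim: w => [|x w IH] //=.
case: eqP => [->|_] /=; first by rewrite H0 rmul1l.
by rewrite IH.
Qed.

Definition ts r := match r with RX _ => 0 | RT _ _ => 1 | RZ => 2 end.
Definition xs r := match r with RX k => k | RT a b => a + b | RZ => 0 end.
Definition tsw (r : nat -> R) w := sumn [seq ts (r i) | i <- w].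
Definition xsw (r : nat -> R) w := sumn [seq xs (r i) | i <- w].

Lemma ts_mul r s : ts (rmul r s) = minn 2 (ts r + ts s).
Proof. by case: r => [k|a b|]; case: s => [l|c d|]. Qed.

Lemma xs_mul r s : ts r + ts s < 2 -> xs (rmul r s) = xs r + xs s.
Proof. case: r => [k|a b|]; case: s => [l|c d|] //= _; lia. Qed.

Lemma ts_reval r w : ts (reval r w) = minn 2 (tsw r w).
Proof.
elim: w => [|x w IH] //=; rewrite ts_mul IH /tsw /=; lia.
Qed.

Lemma xs_reval r w : tsw r w < 2 -> xs (reval r w) = xsw r w.
Proof.
elim: w => [|x w IH] //=; rewrite /tsw /xsw /= => H.
rewrite xs_mul; last by rewrite ts_reval /tsw; lia.
rewrite IH //; rewrite /tsw; lia.
Qed.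

Lemma nrm_eq_of n f r w1 w2 : 0 < n ->
  tsw r w1 = tsw r w2 -> xsw r w1 = xsw r w2 -> (tsw r w1 = 1 -> n <= xsw r w1) ->
  nrm n f (reval r w1) = nrm n f (reval r w2).
Proof.
move=> n0 Et Ex Hc.
have T1 := ts_reval r w1; have T2 := ts_reval r w2.
have [h|h] := leqP 2 (tsw r w1).
  move: T1 T2; case: (reval r w1) => [k|a b|] /=;
  case: (reval r w2) => [k'|a' b'|] //=; lia.
have X1 := xs_reval h; rewrite Et in h; have X2 := xs_reval h.
rewrite -Et in h.
move: T1 T2 X1 X2 Hc; rewrite -Et -Ex.
case: (reval r w1) => [k|a b|] /=; case: (reval r w2) => [k'|a' b'|] /=; try lia.
- by move=> _ _ -> ->.
- move=> T1' _ X1' X2' H.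
  have {}H : n <= xsw r w1 by apply: H; lia.
  case: ifP => ?; first lia. case: ifP => ?; first lia.
  case: ifP => ?; first lia. case: ifP => ?; first lia. done.
Qed.

Lemma O_raw1 r : reval r [:: 0; 1; 2; 0; 3; 1] = reval r [:: 1; 0; 2; 0; 3; 1].
Proof.
rewrite /reval /=; case: (r 0) => [?|? ?|]; case: (r 1) => [?|? ?|];
case: (r 2) => [?|? ?|]; case: (r 3) => [?|? ?|] //=; (congr RX; lia) || (congr RT; lia).
Qed.
Lemma O_raw2 r : reval r [:: 0; 2; 0; 1; 3; 1] = reval r [:: 0; 2; 1; 0; 3; 1].
Proof.
rewrite /reval /=; case: (r 0) => [?|? ?|]; case: (r 1) => [?|? ?|];
case: (r 2) => [?|? ?|]; case: (r 3) => [?|? ?|] //=; (congr RX; lia) || (congr RT; lia).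
Qed.
Lemma O_raw3 r : reval r [:: 0; 2; 1; 3; 0; 1] = reval r [:: 0; 2; 1; 3; 1; 0].
Proof.
rewrite /reval /=; case: (r 0) => [?|? ?|]; case: (r 1) => [?|? ?|];
case: (r 2) => [?|? ?|]; case: (r 3) => [?|? ?|] //=; (congr RX; lia) || (congr RT; lia).
Qed.

Lemma sum_lhs g n : sumn [seq g i | i <- An_lhs n] = g 0 * n + sumn [seq g i | i <- iota 1 n].
Proof. by rewrite /An_lhs map_cat sumn_cat map_nseq sumn_nseq. Qed.

Lemma sum_flat g s m : sumn [seq g i | i <- flatten [seq [:: i; 0] | i <- iota s m]]
  = sumn [seq g i | i <- iota s m] + g 0 * m.
Proof. elim: m s => [|m IH] s /=; first by rewrite muln0 addn0. rewrite IH mulnS; lia. Qed.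

Lemma filter_flat s m : 0 < s ->
  [seq i <- flatten [seq [:: i; 0] | i <- iota s m] | i != 0] = iota s m.
Proof.
elim: m s => [|m IH] s s0 //=.
have -> : (s != 0) = true by lia.
by rewrite IH.
Qed.

Lemma filter_lhs n : [seq i <- An_lhs n | i != 0] = iota 1 n.
Proof.
rewrite /An_lhs filter_cat filter_nseq /=.
apply/all_filterP/allP => i; rewrite mem_iota; lia.
Qed.

Lemma An_raw n f r : 3 <= n -> nrm n f (reval r (An_lhs n)) = nrm n f (reval r (An_rhs n)).
Proof.
move=> n3.
case E: (r 0) => [[|k]|a b|].
- by rewrite (reval_filter _ E) (reval_filter (An_rhs n) E) filter_lhs filter_flat.
all: apply: nrm_eq_of; try lia;
  rewrite /tsw /xsw ?sum_lhs /An_rhs ?sum_flat E /= ?mul0n ?mul1n ?mulSn; lia.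
Qed.

Lemma sum_B g n j : j < n -> sumn [seq g i | i <- Bword n j] = g 0 * (n - 1) + g 1.
Proof.
move=> jn; rewrite /Bword map_cat sumn_cat map_nseq sumn_nseq /= map_nseq sumn_nseq.
rewrite -[in RHS](@subnK j (n - 1)); last lia.
rewrite mulnDr; lia.
Qed.

Lemma filter_B n j : [seq i <- Bword n j | i != 0] = [:: 1].
Proof. by rewrite /Bword filter_cat filter_nseq /= filter_nseq /= ?mul0n. Qed.

Lemma reval_nseq r m : r 0 = RX 1 -> reval r (nseq m 0) = RX m.
Proof. move=> E; elim: m => [|m IH] //=; by rewrite E IH /= add1n. Qed.

Lemma reval_exact r a b : r 0 = RX 1 -> r 1 = RT 0 0 ->
  reval r (nseq a 0 ++ 1 :: nseq b 0) = RT a b.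
Proof.
move=> E0 E1; rewrite reval_cat /= E1 !reval_nseq //= addn0 add0n //.
Qed.

Lemma nrm_top n f j : j < n -> nrm n f (RT (n - 1 - j) j) = RT (n - 1 - f j) (f j).
Proof. move=> jn /=; rewrite subnK; last lia. by rewrite ltnn eqxx. Qed.

Lemma Id_raw n f i j r : 3 <= n -> i < n -> j < n -> f i = f j ->
  nrm n f (reval r (Bword n i)) = nrm n f (reval r (Bword n j)).
Proof.
move=> n3 Hi Hj Hij.
case E0: (r 0) => [[|k]|a b|].
- by rewrite (reval_filter _ E0) (reval_filter (Bword n j) E0) !filter_B.
- case E1: (r 1) => [m|a b|].
  + apply: nrm_eq_of; try lia; rewrite /tsw /xsw ?(sum_B _ Hi) ?(sum_B _ Hj) E0 E1 /=; lia.
  + have [[k0 [a0 b0]]|H] : (k = 0 /\ a = 0 /\ b = 0) \/ 0 < k + a + b by lia.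
    * subst k a b; rewrite /Bword !reval_exact // !nrm_top //.
      by rewrite Hij.
    * apply: nrm_eq_of; try lia; rewrite /tsw /xsw ?(sum_B _ Hi) ?(sum_B _ Hj) E0 E1 /=; nia.
  + apply: nrm_eq_of; try lia; rewrite /tsw /xsw ?(sum_B _ Hi) ?(sum_B _ Hj) E0 E1 /=; lia.
- apply: nrm_eq_of; try lia; rewrite /tsw /xsw ?(sum_B _ Hi) ?(sum_B _ Hj) E0 /=; lia.
- apply: nrm_eq_of; try lia; rewrite /tsw /xsw ?(sum_B _ Hi) ?(sum_B _ Hj) E0 /=; lia.
Qed.

Lemma index_B m s : index 1 (nseq m 0 ++ 1 :: s) = m.
Proof. by elim: m => //= m ->. Qed.

Lemma Bword_inj n i j : i < n -> j < n -> Bword n i = Bword n j -> i = j.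
Proof. move=> hi hj /(f_equal (index 1)); rewrite /Bword !index_B; lia. Qed.

Lemma rs_X r w k : r 0 = RX 1 -> r 1 = RT 0 0 -> (forall i, 1 < i -> r i = RZ) ->
  reval r w = RX k -> w = nseq k 0.
Proof.
move=> E0 E1 EZ; elim: w k => [|c w IH] k /=; first by case=> <-.
case: c => [|[|c]]; rewrite ?E0 ?E1 ?(EZ c.+2) //.
- case E: (reval r w) => [k'|a b|] //= [<-]; by rewrite (IH k' E) add1n.
- by case: (reval r w).
Qed.

Lemma rs_T r w a b : r 0 = RX 1 -> r 1 = RT 0 0 -> (forall i, 1 < i -> r i = RZ) ->
  reval r w = RT a b -> w = nseq a 0 ++ 1 :: nseq b 0.
Proof.
move=> E0 E1 EZ; elim: w a => [|c w IH] a //=.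
case: c => [|[|c]]; rewrite ?E0 ?E1 ?(EZ c.+2) //.
- case E: (reval r w) => [k'|a' b'|] //= [Ea Eb]; subst; by rewrite (IH a' E) add1n.
- case E: (reval r w) => [k'|a' b'|] //= [<- <-]; by rewrite (rs_X E0 E1 EZ E).
Qed.

Definition Pd n (pi : word -> word -> Prop) b k : bool :=
  if excluded_middle_informative (pi (Bword n k) (Bword n b)) then true else false.

Lemma PdP n pi b k : Pd n pi b k <-> pi (Bword n k) (Bword n b).
Proof. by rewrite /Pd; case: excluded_middle_informative. Qed.

Definition fdef n (pi : word -> word -> Prop) b := find (Pd n pi b) (iota 0 n).

Lemma fdef_spec n pi b : eqrel_on_B n pi -> b < n ->
  fdef n pi b < n /\ pi (Bword n (fdef n pi b)) (Bword n b).
Proof.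
move=> [Hdom Hrefl Hsym Htr] bn.
have hP : has (Pd n pi b) (iota 0 n).
  apply/hasP; exists b; first by rewrite mem_iota; lia.
  by apply/PdP; apply: Hrefl; exists b.
have := nth_find 0 hP; rewrite has_find size_iota in hP.
rewrite nth_iota // add0n => /PdP H.
by split.
Qed.

Lemma fdef_eq n pi b b' : eqrel_on_B n pi ->
  pi (Bword n b) (Bword n b') -> fdef n pi b = fdef n pi b'.
Proof.
move=> [Hdom Hrefl Hsym Htr] H; apply: eq_find => k; rewrite /Pd.
case: excluded_middle_informative => H1; case: excluded_middle_informative => H2 //.
- exfalso; apply: H2; exact: Htr H1 H.
- exfalso; apply: H1; exact: Htr H2 (Hsym _ _ H).
Qed.

Lemma fdef_good n pi : 0 < n -> eqrel_on_B n pi -> goodf n (fdef n pi).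
Proof.
move=> n0 Heq b bn; have [|h1 h2] := @fdef_spec n pi b Heq; first lia.
split; first lia.
exact: fdef_eq Heq h2.
Qed.

Lemma fdef_rel n pi b b' : eqrel_on_B n pi -> b < n -> b' < n ->
  fdef n pi b = fdef n pi b' -> pi (Bword n b) (Bword n b').
Proof.
move=> Heq hb hb' E; have [_ h1] := fdef_spec Heq hb; have [_ h2] := fdef_spec Heq hb'.
case: Heq => Hdom Hrefl Hsym Htr.
rewrite E in h1; exact: Htr (Hsym _ _ h1) h2.
Qed.

Definition rs (i : nat) : R := match i with 0 => RX 1 | 1 => RT 0 0 | _ => RZ end.

Lemma valid_rs n f i : 3 <= n -> valid n f (rs i).
Proof. move=> n3; case: i => [|[|i]] //=; apply/orP; left; lia. Qed.

Theorem lemma3p3 (n : nat) (pi : word -> word -> Prop) (u v : word) :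
  3 <= n -> eqrel_on_B n pi -> var_sat n pi u v -> inB n u ->
  inB n v /\ pi u v.
Proof.
move=> n3 Heq Hsat [j jn Eu]; subst u.
have Hgood : goodf n (fdef n pi) by apply: fdef_good => //; lia.
pose M := Mon Hgood.
have HM : in_AnId n pi M.
  split.
  - split; apply: sat_of_raw => r; [rewrite O_raw1 | rewrite O_raw2 | rewrite O_raw3] => //.
  - by apply: sat_of_raw => r; apply: An_raw.
  - move=> u v' Huv; case: (Heq) => Hdom _ _ _.
    have [[i hi Eu] [i' hi' Ev]] := Hdom u v' Huv; subst u v'.
    apply: sat_of_raw => r; apply: Id_raw => //; exact: fdef_eq Heq Huv.
pose s : nat -> M := fun i => exist _ (rs i) (valid_rs (fdef n pi) i n3).
have := Hsat M HM s; move/(f_equal sval); rewrite !val_eval.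
have E0 : (fun i => sval (s i)) 0 = RX 1 by [].
have E1 : (fun i => sval (s i)) 1 = RT 0 0 by [].
have EZ : forall i, 1 < i -> (fun i => sval (s i)) i = RZ by case=> [|[|i]].
rewrite /Bword reval_exact // nrm_top //.
have [fjn _] := fdef_spec Heq jn.
case Ev: (reval _ v) => [k|a b|] //=.
have -> := rs_T E0 E1 EZ Ev.
case: ifP => h1; first by case=> ? ?; lia.
case: ifP => h2 // [_ Efb].
have bn : b < n by lia.
have -> : a = n - 1 - b by lia.
split; first by exists b.
by apply: fdef_rel.
Qed.
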